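(* Let $L$ be an infinite dimensional Lie algebra over a field $F$ generated by elements $a_1,\dots,a_m$ such that every element of the Lie set $S\langle a_1,\dots,a_m\rangle$ is ad-nilpotent. Then $L$ has a just infinite homomorphic image.
   Context: An element $a\in L$ is ad-nilpotent if $\operatorname{ad}(a):x\mapsto[x,a]$ is nilpotent. $S\langle a_1,\dots,a_m\rangle$ is the smallest subset containing the $a_i$ and closed under the bracket. An algebra is just infinite if it is infinite dimensional but every nonzero ideal has finite codimension. *)

(* Defs.v *)
From HB Require Import structures.
From mathcomp Require Import all_boot all_order all_algebra.
Set Implicit Arguments. Unset Strict Implicit. Unset Printing Implicit Defensive.
Import GRing.Theory.
Local Open Scope ring_scope.

Section Lie.
Variable F : fieldType.

Definition is_lie (V : lmodType F) (br : V -> V -> V) : Prop :=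
  [/\ (forall (a : F) (x y z : V), br (a *: x + y) z = a *: br x z + br y z),
      (forall (a : F) (x y z : V), br z (a *: x + y) = a *: br z x + br z y),
      (forall x : V, br x x = 0) &
      (forall x y z : V, br x (br y z) + br y (br z x) + br z (br x y) = 0)].

Definition in_span (V : lmodType F) (s : seq V) (v : V) : Prop :=
  exists c : 'I_(size s) -> F, v = \sum_(i < size s) c i *: s`_i.

Definition finite_dim (V : lmodType F) : Prop :=
  exists s : seq V, forall v : V, in_span s v.

Definition infinite_dim (V : lmodType F) : Prop := ~ finite_dim V.

Definition is_ideal (V : lmodType F) (br : V -> V -> V) (I : V -> Prop) : Prop :=
  [/\ I 0,
      (forall x y, I x -> I y -> I (x + y)),
      (forall (a : F) x, I x -> I (a *: x)) &
      (forall x y, I x -> I (br x y))].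

Definition finite_codim (V : lmodType F) (I : V -> Prop) : Prop :=
  exists s : seq V, forall v : V,
    exists c : 'I_(size s) -> F, I (v - \sum_(i < size s) c i *: s`_i).

Definition just_infinite (V : lmodType F) (br : V -> V -> V) : Prop :=
  infinite_dim V /\
  forall I : V -> Prop, is_ideal br I -> (exists x, I x /\ x <> 0) ->
    finite_codim I.

Definition ad_nilpotent (V : lmodType F) (br : V -> V -> V) (a : V) : Prop :=
  exists n : nat, forall x : V, iter n (fun y => br y a) x = 0.

Inductive lie_set (V : lmodType F) (br : V -> V -> V) (m : nat) (a : 'I_m -> V)
  : V -> Prop :=
| lie_set_gen : forall i, lie_set br a (a i)
| lie_set_br : forall x y, lie_set br a x -> lie_set br a y -> lie_set br a (br x y).

Inductive lie_subalg (V : lmodType F) (br : V -> V -> V) (m : nat) (a : 'I_m -> V)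
  : V -> Prop :=
| lie_subalg_gen : forall i, lie_subalg br a (a i)
| lie_subalg_0 : lie_subalg br a 0
| lie_subalg_add : forall x y, lie_subalg br a x -> lie_subalg br a y ->
    lie_subalg br a (x + y)
| lie_subalg_scale : forall (c : F) x, lie_subalg br a x -> lie_subalg br a (c *: x)
| lie_subalg_br : forall x y, lie_subalg br a x -> lie_subalg br a y ->
    lie_subalg br a (br x y).

Definition lie_generated (V : lmodType F) (br : V -> V -> V) (m : nat)
  (a : 'I_m -> V) : Prop := forall v : V, lie_subalg br a v.

Definition lie_hom (V W : lmodType F) (brV : V -> V -> V) (brW : W -> W -> W)
  (f : V -> W) : Prop :=
  (forall (c : F) x y, f (c *: x + y) = c *: f x + f y) /\
  (forall x y, f (brV x y) = brW (f x) (f y)).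

Definition has_just_infinite_image (V : lmodType F) (br : V -> V -> V) : Prop :=
  exists (W : lmodType F) (brW : W -> W -> W) (f : V -> W),
    [/\ is_lie brW, lie_hom br brW f, (forall w, exists v, f v = w) &
        just_infinite brW].

End Lie.

(* Main.v *)
From HB Require Import structures.
From mathcomp Require Import all_boot all_order all_algebra.
From mathcomp Require Import boolp generic_quotient classical_sets.
Require Import Defs.
Set Implicit Arguments. Unset Strict Implicit. Unset Printing Implicit Defensive.
Import GRing.Theory.
Local Open Scope classical_set_scope.
Local Open Scope quotient_scope.
Local Open Scope ring_scope.

Section Quo.
Context (F : fieldType) (L : lmodType F) (A : L -> Prop)
  (A0 : A 0) (AD : forall x y, A x -> A y -> A (x + y))
  (AZ : forall (c : F) x, A x -> A (c *: x)).

Lemma AN x : A x -> A (- x).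
Proof. by move=> h; rewrite -scaleN1r; apply: AZ. Qed.

Lemma AB x y : A x -> A y -> A (x - y).
Proof. by move=> hx hy; apply: AD => //; apply: AN. Qed.

Definition qrel : rel L := fun x y => `[< A (x - y) >].

Lemma qrel_refl : reflexive qrel.
Proof. by move=> x; apply/asboolP; rewrite subrr. Qed.
Lemma qrel_sym : symmetric qrel.
Proof.
move=> x y; apply/asboolP/asboolP => /AN; by rewrite opprB.
Qed.
Lemma qrel_trans : transitive qrel.
Proof.
move=> y x z /asboolP h1 /asboolP h2; apply/asboolP.
by have := AD h1 h2; rewrite addrA subrK.
Qed.

Canonical qrel_equiv := EquivRel qrel qrel_refl qrel_sym qrel_trans.

Definition Q := {eq_quot qrel}%qT.
HB.instance Definition _ := Choice.on Q.

Definition qpi (x : L) : Q := \pi_Q x.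
Definition qrepr (x : Q) : L := repr x.

Lemma qpiE x y : qpi x = qpi y <-> A (x - y).
Proof.
split.
  by move=> /eqP; rewrite /qpi eqmodE => /asboolP.
by move=> h; apply/eqmodP; apply/asboolP.
Qed.

Lemma qreprK (x : Q) : qpi (qrepr x) = x.
Proof. exact: reprK. Qed.

Lemma qrepr_pi x : A (qrepr (qpi x) - x).
Proof. by apply/qpiE; rewrite qreprK. Qed.

Lemma qind (P : Q -> Prop) : (forall x, P (qpi x)) -> forall q, P q.
Proof. by move=> h q; rewrite -(qreprK q). Qed.

Definition qzero : Q := qpi 0.
Definition qadd (x y : Q) : Q := qpi (qrepr x + qrepr y).
Definition qopp (x : Q) : Q := qpi (- qrepr x).
Definition qscale (c : F) (x : Q) : Q := qpi (c *: qrepr x).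

Lemma qaddE x y : qadd (qpi x) (qpi y) = qpi (x + y).
Proof.
apply/qpiE; have := AD (qrepr_pi x) (qrepr_pi y).
by congr A; rewrite opprD !addrA; congr (_ + _); rewrite addrAC.
Qed.
Lemma qoppE x : qopp (qpi x) = qpi (- x).
Proof. by apply/qpiE; have := AN (qrepr_pi x); rewrite opprB addrC opprK. Qed.
Lemma qscaleE c x : qscale c (qpi x) = qpi (c *: x).
Proof. by apply/qpiE; have := AZ c (qrepr_pi x); rewrite scalerBr. Qed.

Lemma qaddA : associative qadd.
Proof. by elim/qind=> x; elim/qind=> y; elim/qind=> z; rewrite !qaddE addrA. Qed.
Lemma qaddC : commutative qadd.
Proof. by elim/qind=> x; elim/qind=> y; rewrite !qaddE addrC. Qed.
Lemma qadd0 : left_id qzero qadd.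
Proof. by elim/qind=> x; rewrite /qzero qaddE add0r. Qed.
Lemma qaddN : left_inverse qzero qopp qadd.
Proof. by elim/qind=> x; rewrite qoppE qaddE addNr. Qed.

HB.instance Definition _ := GRing.isZmodule.Build Q qaddA qaddC qadd0 qaddN.

Lemma qaddE' x y : (qpi x : Q) + qpi y = qpi (x + y).
Proof. exact: qaddE. Qed.

Lemma qscaleA a b v : qscale a (qscale b v) = qscale (a * b) v.
Proof. by elim/qind: v => x; rewrite !qscaleE scalerA. Qed.
Lemma qscale1 : left_id 1 qscale.
Proof. by elim/qind=> x; rewrite qscaleE scale1r. Qed.
Lemma qscaleDr : right_distributive qscale (@GRing.add Q).
Proof.
move=> a; elim/qind=> x; elim/qind=> y.
by rewrite qaddE' !qscaleE qaddE' scalerDr.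
Qed.
Lemma qscaleDl v : {morph qscale^~ v: a b / a + b}.
Proof.
by elim/qind: v => x a b; rewrite !qscaleE qaddE' scalerDl.
Qed.

HB.instance Definition _ := GRing.Zmodule_isLmodule.Build F Q qscaleA qscale1 qscaleDr qscaleDl.

Definition QL : lmodType F := Q.

Lemma qpi_lin (c : F) x y : qpi (c *: x + y) = c *: (qpi x : QL) + qpi y.
Proof. by rewrite -qaddE' -qscaleE. Qed.

Lemma qpi0 : qpi 0 = 0 :> QL.
Proof. by []. Qed.

Lemma qpi_eq0 x : qpi x = 0 :> QL <-> A x.
Proof. by rewrite -qpi0 qpiE subr0. Qed.

End Quo.

Section LieFacts.
Context (F : fieldType) (L : lmodType F) (br : L -> L -> L) (Hlie : is_lie br).

Lemma lieL : forall (a : F) (x y z : L), br (a *: x + y) z = a *: br x z + br y z.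
Proof. by move: Hlie; rewrite /is_lie => -[]. Qed.
Lemma lieR : forall (a : F) (x y z : L), br z (a *: x + y) = a *: br z x + br z y.
Proof. by move: Hlie; rewrite /is_lie => -[]. Qed.
Lemma lieXX : forall x : L, br x x = 0.
Proof. by move: Hlie; rewrite /is_lie => -[]. Qed.
Lemma lieJ : forall x y z : L, br x (br y z) + br y (br z x) + br z (br x y) = 0.
Proof. by move: Hlie; rewrite /is_lie => -[]. Qed.

Lemma dbl0 (b : L) : b = b + b -> b = 0.
Proof. by move=> h; have := congr1 (fun t => t - b) h; rewrite subrr addrK. Qed.

Lemma br0l z : br 0 z = 0.
Proof.
have hl := lieL; apply: dbl0.
move: (hl 1 0 0 z); rewrite !scale1r addr0 => HH; exact: HH.
Qed.
Lemma br0r z : br z 0 = 0.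
Proof.
have hr := lieR; apply: dbl0.
move: (hr 1 0 0 z); rewrite !scale1r addr0 => HH; exact: HH.
Qed.
Lemma brDl x y z : br (x + y) z = br x z + br y z.
Proof. by have hl := lieL; have := hl 1 x y z; rewrite !scale1r. Qed.
Lemma brDr x y z : br z (x + y) = br z x + br z y.
Proof. by have hr := lieR; have := hr 1 x y z; rewrite !scale1r. Qed.
Lemma brZl c x z : br (c *: x) z = c *: br x z.
Proof. by have hl := lieL; have := hl c x 0 z; rewrite !addr0 br0l addr0. Qed.
Lemma brZr c x z : br z (c *: x) = c *: br z x.
Proof. by have hr := lieR; have := hr c x 0 z; rewrite !addr0 br0r addr0. Qed.
Lemma brNl x z : br (- x) z = - br x z.
Proof. by rewrite -scaleN1r brZl scaleN1r. Qed.
Lemma brNr x z : br z (- x) = - br z x.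
Proof. by rewrite -scaleN1r brZr scaleN1r. Qed.
Lemma brBl x y z : br (x - y) z = br x z - br y z.
Proof. by rewrite brDl brNl. Qed.
Lemma brBr x y z : br z (x - y) = br z x - br z y.
Proof. by rewrite brDr brNr. Qed.
Lemma br_anti x y : br x y = - br y x.
Proof.
have hxx := lieXX; have := hxx (x + y).
rewrite brDl !brDr !hxx add0r addr0 => /eqP; rewrite addr_eq0 => /eqP //.
Qed.
Lemma br_suml I (r : seq I) (P : pred I) (f : I -> L) z :
  br (\sum_(i <- r | P i) f i) z = \sum_(i <- r | P i) br (f i) z.
Proof.
apply: (big_morph (fun t => br t z)); [exact: (fun x y => brDl x y z) | exact: br0l].
Qed.
Lemma br_jac x y z : br x (br y z) = br (br x y) z - br (br x z) y.
Proof.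
have h := lieJ x y z.
have e1 : br y (br z x) = br (br x z) y by rewrite br_anti (br_anti z x) brNl opprK.
have e2 : br z (br x y) = - br (br x y) z by rewrite br_anti.
rewrite e1 e2 in h.
apply/eqP; rewrite -subr_eq0; apply/eqP.
by rewrite -h opprB addrA.
Qed.

Inductive lnm (m : nat) (a : 'I_m -> L) : L -> Prop :=
| lnm_gen i : lnm a (a i)
| lnm_0 : lnm a 0
| lnm_add x y : lnm a x -> lnm a y -> lnm a (x + y)
| lnm_sc (c : F) x : lnm a x -> lnm a (c *: x)
| lnm_ad x i : lnm a x -> lnm a (br x (a i)).

Lemma lnm_br m (a : 'I_m -> L) y : lnm a y -> forall x, lnm a x -> lnm a (br x y).
Proof.
elim=> {y} [i||y1 y2 _ IH1 _ IH2|c y _ IH|y i _ IH] x hx.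
- exact: lnm_ad.
- by rewrite br0r; apply: lnm_0.
- by rewrite brDr; apply: lnm_add; [apply: IH1|apply: IH2].
- by rewrite brZr; apply: lnm_sc; apply: IH.
- rewrite br_jac -scaleN1r; apply: lnm_add; first by apply: lnm_ad; apply: IH.
  by apply: lnm_sc; apply: IH; apply: lnm_ad.
Qed.

Lemma subalg_lnm m (a : 'I_m -> L) v : lie_subalg br a v -> lnm a v.
Proof.
elim=> {v} [i||x y _ IH1 _ IH2|c x _ IH|x y _ IH1 _ IH2].
- exact: lnm_gen.
- exact: lnm_0.
- exact: lnm_add.
- exact: lnm_sc.
- exact: lnm_br.
Qed.

Section Codim.
Context (C : L -> Prop) (C0 : C 0) (CD : forall x y, C x -> C y -> C (x + y))
  (CZ : forall (c : F) x, C x -> C (c *: x)) (CB : forall x y, C x -> C (br x y)).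

Lemma C_sum n (f : 'I_n -> L) : (forall i, C (f i)) -> C (\sum_(i < n) f i).
Proof. by move=> h; apply: big_ind => //; move=> i _; apply: h. Qed.

Lemma codim_lemma m (a : 'I_m -> L) (s : seq L) :
  lie_generated br a ->
  (forall i, exists c : 'I_(size s) -> F, C (a i - \sum_(k < size s) c k *: s`_k)) ->
  (forall i (j : 'I_(size s)), exists c : 'I_(size s) -> F,
     C (br s`_j (a i) - \sum_(k < size s) c k *: s`_k)) ->
  finite_codim C.
Proof.
move=> gen hgen had.
have [d hd] := choice (fun ij : 'I_m * 'I_(size s) => had ij.1 ij.2).
exists s => v.
have : lnm a v by apply: subalg_lnm; apply: gen.
elim=> {v} [i||x y _ [c1 h1] _ [c2 h2]|c x _ [c1 h1]|x i _ [c h]].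
- exact: hgen.
- by exists (fun _ => 0); rewrite big1 ?subrr // => k _; rewrite scale0r.
- exists (fun k => c1 k + c2 k).
  have -> : \sum_(k < size s) (c1 k + c2 k) *: s`_k =
    \sum_(k < size s) c1 k *: s`_k + \sum_(k < size s) c2 k *: s`_k.
    by rewrite -big_split; apply: eq_bigr => k _; rewrite scalerDl.
  by have := CD h1 h2; congr C; rewrite opprD addrACA.
- exists (fun k => c * c1 k).
  have := CZ c h1; congr C; rewrite scalerBr scaler_sumr; congr (_ - _).
  by apply: eq_bigr => k _; rewrite scalerA.
- pose e k := \sum_(j < size s) c j * d (i, j) k.
  exists e.
  set w := x - _ in h.
  have hx : x = w + \sum_(j < size s) c j *: s`_j by rewrite /w subrK.
  have hsum : C (\sum_(j < size s) c j *: (br s`_j (a i) - \sum_(k < size s) d (i, j) k *: s`_k)).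
    by apply: C_sum => j; apply: CZ; apply: (hd (i, j)).
  have := CD (CB (a i) h) hsum; congr C.
  have E1 : \sum_(j < size s) br (c j *: s`_j) (a i) = \sum_(j < size s) c j *: br s`_j (a i).
    by apply: eq_bigr => j _; rewrite brZl.
  have E2 : \sum_(j < size s) c j *: (br s`_j (a i) - \sum_(k < size s) d (i, j) k *: s`_k)
     = \sum_(j < size s) c j *: br s`_j (a i) - \sum_(k < size s) e k *: s`_k.
    rewrite (eq_bigr (fun j => c j *: br s`_j (a i) - c j *: \sum_(k < size s) d (i, j) k *: s`_k));
      last by move=> j _; rewrite scalerBr.
    rewrite sumrB; congr (_ - _).
    under eq_bigr do rewrite scaler_sumr.
    rewrite exchange_big /=; apply: eq_bigr => k _.
    rewrite /e scaler_suml; apply: eq_bigr => j _; by rewrite scalerA.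
  by rewrite E2 hx brDl br_suml E1 addrA.
Qed.
End Codim.
End LieFacts.

Lemma reindex (F : fieldType) (V W : lmodType F) (f : W -> V) (s : seq W)
  (c : 'I_(size s) -> F) : exists c' : 'I_(size (map f s)) -> F,
  \sum_(k < size (map f s)) c' k *: (map f s)`_k = \sum_(k < size s) c k *: f s`_k.
Proof.
elim: s c => [|x s IH] c /=.
  by exists (fun _ => 0); rewrite !big_ord0.
have [c'' h] := IH (fun k => c (lift ord0 k)).
exists (fun k => if unlift ord0 k is Some k' then c'' k' else c ord0).
rewrite !big_ord_recl /= unlift_none; congr (_ + _).
rewrite -h; apply: eq_bigr => k _; by rewrite liftK.
Qed.

Section Main.
Context (F : fieldType) (L : lmodType F) (br : L -> L -> L) (Hlie : is_lie br).

Definition Pz (X : set L) := X = set0 \/ (is_ideal br X /\ ~ finite_codim X).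

Lemma zero_ideal_inf : infinite_dim L -> Pz [set x | x = 0].
Proof.
move=> Hinf; right; split.
  split => //=.
  - by move=> x y -> ->; rewrite addr0.
  - by move=> c x ->; rewrite scaler0.
  - by move=> x y ->; rewrite br0l.
move=> [s hs]; apply: Hinf; exists s => v.
have [c hc] := hs v; exists c; by apply/eqP; rewrite -subr_eq0; apply/eqP.
Qed.

Lemma chain_ub m (a : 'I_m -> L) : lie_generated br a ->
  forall Fm : set (set L), Fm `<=` Pz -> total_on Fm subset -> Pz (\bigcup_(X in Fm) X).
Proof.
move=> gen Fm FP Ftot.
have memI X x : Fm X -> X x -> is_ideal br X /\ ~ finite_codim X.
  by move=> FX Xx; case: (FP X FX) => // eX; rewrite eX in Xx.
have [[X0 [FX0 X00]]|no] := pselect (exists X, Fm X /\ X 0); last first.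
  left; apply: funext => x; apply: propext; split => // -[X FX Xx].
  apply: no; exists X; split => //; by case: (memI X x FX Xx) => -[].
have big2 X Y x y : Fm X -> Fm Y -> X x -> Y y -> exists Z, [/\ Fm Z, Z x & Z y].
  move=> FX FY Xx Yy; case: (Ftot X Y FX FY) => h.
    by exists Y; split => //; apply: h.
  by exists X; split => //; apply: h.
have biglist (l : seq L) : (forall y, y \in l -> (\bigcup_(X in Fm) X) y) ->
    exists X, [/\ Fm X, X 0 & forall y, y \in l -> X y].
  elim: l => [|y l IH] hl; first by exists X0; split.
  have [X [FX X0' Xl]] : exists X, [/\ Fm X, X 0 & forall y, y \in l -> X y].
    by apply: IH => z zl; apply: hl; rewrite inE zl orbT.
  have [Y FY Yy] := hl y (mem_head _ _).
  case: (Ftot X Y FX FY) => h.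
    exists Y; split => //; first by apply: h.
    by move=> z; rewrite inE => /orP[/eqP ->|/Xl]; [|apply: h].
  exists X; split => //.
  by move=> z; rewrite inE => /orP[/eqP ->|/Xl]; [apply: h|].
right; split.
  split.
  - by exists X0.
  - move=> x y [X FX Xx] [Y FY Yy].
    have [Z [FZ Zx Zy]] := big2 X Y x y FX FY Xx Yy.
    exists Z => //; have [[_ ZD _ _] _] := memI Z x FZ Zx; exact: ZD.
  - move=> c x [X FX Xx]; exists X => //.
    have [[_ _ XZ _] _] := memI X x FX Xx; exact: XZ.
  - move=> x y [X FX Xx]; exists X => //.
    have [[_ _ _ XB] _] := memI X x FX Xx; exact: XB.
move=> [s hs].
have [cA hA] := boolp.choice (fun i : 'I_m => hs (a i)).
have [cB hB] := boolp.choice (fun ij : 'I_m * 'I_(size s) => hs (br s`_ij.2 (a ij.1))).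
pose l := [seq a i - \sum_(k < size s) cA i k *: s`_k | i <- enum 'I_m] ++
  [seq br s`_ij.2 (a ij.1) - \sum_(k < size s) cB ij k *: s`_k | ij : 'I_m * 'I_(size s) <- enum predT].
have hl : forall y, y \in l -> (\bigcup_(X in Fm) X) y.
  move=> y; rewrite mem_cat => /orP[] /mapP [t _ ->]; [exact: hA | exact: hB].
have [X [FX X0' Xl]] := biglist l hl.
have [[_ XD XZ XB] Xfc] := memI X 0 FX X0'.
apply: Xfc; apply: (codim_lemma Hlie X0' XD XZ XB (a := a)) => //.
  move=> i; exists (cA i); apply: Xl; rewrite mem_cat; apply/orP; left.
  by apply/mapP; exists i => //; rewrite mem_enum.
move=> i j; exists (cB (i, j)); apply: Xl; rewrite mem_cat; apply/orP; right.
by apply/mapP; exists (i, j) => //; rewrite mem_enum.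
Qed.
End Main.

Theorem lemma4 (F : fieldType) (L : lmodType F) (br : L -> L -> L)
  (m : nat) (a : 'I_m -> L) :
  is_lie br ->
  infinite_dim L ->
  lie_generated br a ->
  (forall x : L, lie_set br a x -> ad_nilpotent br x) ->
  has_just_infinite_image br.
Proof.
move=> Hlie Hinf gen _.
have [A [PA Amax]] := Zorn_bigcup (chain_ub Hlie gen).
have [HAi HAfc] : is_ideal br A /\ ~ finite_codim A.
  case: PA => // eA; exfalso; apply: (Amax [set x | x = 0]).
    rewrite eA; split => // h; by have := h 0 erefl.
  exact: zero_ideal_inf.
case: (HAi) => A0 AD AZ AB.
pose W := QL A0 AD AZ.
pose f : L -> W := qpi A0 AD AZ.
pose g : W -> L := qrepr (AD := AD) (AZ := AZ).
have fgK w : f (g w) = w by exact: qreprK.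
have fE x y : f x = f y <-> A (x - y) by exact: qpiE.
have gf x : A (g (f x) - x) by exact: qrepr_pi.
have flin c x y : f (c *: x + y) = c *: f x + f y by exact: qpi_lin.
have f0 : f 0 = 0 by [].
have fD x y : f (x + y) = f x + f y by rewrite -[x]scale1r flin !scale1r.
have fZ c x : f (c *: x) = c *: f x by rewrite -[c *: x]addr0 flin f0 addr0.
have find (P : W -> Prop) : (forall x, P (f x)) -> forall w, P w.
  by move=> h w; rewrite -(fgK w); apply: h.
have compat x x' y y' : A (x - x') -> A (y - y') -> A (br x y - br x' y').
  move=> hx hy.
  have -> : br x y - br x' y' = br (x - x') y + (- 1) *: br (y - y') x'.
    rewrite (brBl Hlie) scaleN1r -(br_anti Hlie x' (y - y')) (brBr Hlie).
    by rewrite addrA subrK.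
  by apply: (AD); [apply: (AB) | apply: (AZ); apply: (AB)].
pose brW (u v : W) : W := f (br (g u) (g v)).
have brWE x y : brW (f x) (f y) = f (br x y).
  by apply/fE; apply: compat; apply: gf.
exists W, brW, f; split.
- split.
  + move=> c; elim/find => x; elim/find => y; elim/find => z.
    by rewrite -flin !brWE (lieL Hlie) flin.
  + move=> c; elim/find => x; elim/find => y; elim/find => z.
    by rewrite -flin !brWE (lieR Hlie) flin.
  + by elim/find => x; rewrite brWE (lieXX Hlie).
  + elim/find => x; elim/find => y; elim/find => z.
    by rewrite !brWE -!fD (lieJ Hlie).
- split => //; move=> x y; by rewrite brWE.
- by move=> w; exists (g w).
split.
  move=> [s hs]; apply: HAfc.
  have fsum n (c : 'I_n -> F) (u : 'I_n -> L) :
      f (\sum_(k < n) c k *: u k) = \sum_(k < n) c k *: f (u k).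
    rewrite (big_morph f fD f0); apply: eq_bigr => k _; exact: fZ.
  exists (map g s) => v.
  have [c hc] := hs (f v).
  have [c' hc'] := reindex g c.
  exists c'; rewrite hc'; apply/fE.
  by rewrite hc fsum; apply: eq_bigr => k _; rewrite fgK.
have fsum n (c : 'I_n -> F) (u : 'I_n -> L) :
    f (\sum_(k < n) c k *: u k) = \sum_(k < n) c k *: f (u k).
  rewrite (big_morph f fD f0); apply: eq_bigr => k _; exact: fZ.
have fB x y : f (x - y) = f x - f y by rewrite fD -scaleN1r fZ scaleN1r.
move=> K [K0 KD KZ KB] [w [Kw w0]].
pose B x := K (f x).
have AB' : A `<` B.
  split.
    move=> x Ax; rewrite /B.
    have -> : f x = f 0 by apply/fE; rewrite subr0.
    by rewrite f0.
  move=> h; apply: w0.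
  have : A (g w) by apply: h; rewrite /B fgK.
  move=> Agw; rewrite -(fgK w) -f0; apply/fE; by rewrite subr0.
have fcB : finite_codim B.
  have [//|nfc] := pselect (finite_codim B).
  exfalso; apply: (Amax B AB'); right; split => //; split.
  - by rewrite /B f0.
  - by move=> x y; rewrite /B fD; apply: KD.
  - by move=> c x; rewrite /B fZ; apply: KZ.
  - by move=> x y; rewrite /B -brWE; apply: KB.
have [s hs] := fcB.
exists (map f s) => w'.
have [c hc] := hs (g w').
have [c' hc'] := reindex f c.
exists c'; rewrite hc'.
by move: hc; rewrite /B fB fsum fgK.
Qed.
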